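(* Let $G$ be a commutative group, $H$ its torsion subgroup, and $U\subset G$ a nonempty finite set. If $U$ is contained in a single coset of $H$, then \[ \alpha(U)=\alpha'(U)=\alpha''(U)=\beta(U)=\beta'(U)=\beta''(U)=1; \] otherwise $\beta(U)\ge2$ and $\alpha(U)\ge3/2$.
   Context: With $A,B$ ranging over nonempty finite subsets of $G$: $\alpha(U)=\inf_{A\supset U,B\supset U}\frac{|A+B|}{\sqrt{|A||B|}}$; $\alpha'(U)=\inf_{A\supset U,B\supset U,|A|=|B|}\frac{|A+B|}{|A|}$; $\alpha''(U)=\inf_{A\supset U}\frac{|A+A|}{|A|}$; $\beta(U)=\inf_{A,B}\frac{|A+B+U|}{\sqrt{|A||B|}}$; $\beta'(U)=\inf_{A,B,|A|=|B|}\frac{|A+B+U|}{\sqrt{|A||B|}}$; $\beta''(U)=\inf_A\frac{|A+A+U|}{|A|}$. *)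

(* Defs.v *)
From HB Require Import structures.
From mathcomp Require Import all_boot all_order all_algebra.
From mathcomp Require Import finmap.
From mathcomp Require Import boolp classical_sets reals.
Set Implicit Arguments. Unset Strict Implicit. Unset Printing Implicit Defensive.
Import Order.TTheory GRing.Theory Num.Theory.
Local Open Scope ring_scope.
Local Open Scope fset_scope.

Definition sumset (G : zmodType) (A B : {fset G}) : {fset G} :=
  [fset (a + b)%R | a in A, b in B].

Definition torsion (G : zmodType) (x : G) : Prop :=
  exists n : nat, (0 < n)%N /\ x *+ n = 0.

Section Const.
Variables (R : realType) (G : zmodType).
Local Open Scope classical_set_scope.

Definition card_r (A : {fset G}) : R := (#|` A|)%:R.

Definition alpha (U : {fset G}) : R :=
  inf [set r : R | exists A B : {fset G}, [/\ A != fset0, B != fset0,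
     fsubset U A, fsubset U B &
     r = card_r (sumset A B) / Num.sqrt (card_r A * card_r B)]].

Definition alpha' (U : {fset G}) : R :=
  inf [set r : R | exists A B : {fset G}, [/\ A != fset0, B != fset0,
     fsubset U A, fsubset U B &
     (#|` A| = #|` B|)%N /\ r = card_r (sumset A B) / card_r A]].

Definition alpha'' (U : {fset G}) : R :=
  inf [set r : R | exists A : {fset G}, [/\ A != fset0, fsubset U A &
     r = card_r (sumset A A) / card_r A]].

Definition beta (U : {fset G}) : R :=
  inf [set r : R | exists A B : {fset G}, [/\ A != fset0, B != fset0 &
     r = card_r (sumset (sumset A B) U) / Num.sqrt (card_r A * card_r B)]].

Definition beta' (U : {fset G}) : R :=
  inf [set r : R | exists A B : {fset G}, [/\ A != fset0, B != fset0,
     (#|` A| = #|` B|)%N &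
     r = card_r (sumset (sumset A B) U) / Num.sqrt (card_r A * card_r B)]].

Definition beta'' (U : {fset G}) : R :=
  inf [set r : R | exists A : {fset G}, A != fset0 /\
     r = card_r (sumset (sumset A A) U) / card_r A].
End Const.

(* Main.v *)
Require Import Defs.
From HB Require Import structures.
From mathcomp Require Import all_boot all_order all_algebra.
From mathcomp Require Import finmap.
From mathcomp Require Import boolp classical_sets reals.
From mathcomp Require Import zify lra.
Import Order.TTheory GRing.Theory Num.Theory.
Local Open Scope ring_scope.
Local Open Scope fset_scope.

Section S.
Local Open Scope ring_scope.
Variable G : zmodType.
Implicit Types A B : {fset G}.
Lemma sumsetP A B z : reflect (exists2 a, a \in A & exists2 b, b \in B & z = a + b) (z \in sumset A B).
Proof. exact: imfset2P. Qed.
Lemma sumset_mem A B a b : a \in A -> b \in B -> a + b \in sumset A B.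
Proof. by move=> ha hb; apply/sumsetP; exists a => //; exists b. Qed.
Lemma card_transl A (c : G) : #|` [fset c + a | a in A]| = #|` A|.
Proof. rewrite card_imfset //=; last exact: addrI. Qed.

Lemma mulrn_mod (x : G) n m : x *+ n = 0 -> x *+ m = x *+ (m %% n).
Proof.
move=> hn; rewrite {1}(divn_eq m n) mulrnDr mulnC mulrnA hn mul0rn add0r //.
Qed.

Definition cyc (x : G) n : {fset G} := [fset x *+ i | i in iota 0 n].

Lemma cyc_mem x n m : (0 < n)%N -> x *+ n = 0 -> x *+ m \in cyc x n.
Proof.
move=> n0 hn; rewrite (@mulrn_mod x n m hn); apply/imfsetP; exists (m %% n)%N => //=.
by rewrite mem_iota add0n ltn_pmod.
Qed.

Lemma torsion_group (s : seq G) : (forall u, u \in s -> torsion u) ->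
  exists K : {fset G}, [/\ 0 \in K, {in K &, forall a b, a + b \in K} &
     forall u, u \in s -> u \in K].
Proof.
elim: s => [|y s IH] hs.
  exists [fset 0]; split => //; first by rewrite inE.
  by move=> a b; rewrite !inE => /eqP -> /eqP ->; rewrite addr0.
have [K [K0 KD Ks]] : exists K : {fset G}, [/\ 0 \in K, {in K &, forall a b, a + b \in K} &
     forall u, u \in s -> u \in K].
  by apply: IH => u us; apply: hs; rewrite inE us orbT.
have [n [n0 hn]] : torsion y by apply: hs; rewrite inE eqxx.
have c0 : 0 \in cyc y n by rewrite -(mulr0n y); apply: cyc_mem.
exists (sumset K (cyc y n)); split.
- by rewrite -[0]addr0; apply: sumset_mem => //; rewrite -(mulr0n y); apply: cyc_mem.
- move=> a b /sumsetP [k1 k1K [c1 /imfsetP [i1 _ ->] ->]] /sumsetP [k2 k2K [c2 /imfsetP [i2 _ ->] ->]].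
  rewrite addrACA -mulrnDr; apply: sumset_mem; first exact: KD.
  exact: cyc_mem.
- move=> u; rewrite inE => /orP [/eqP ->|us].
    by rewrite -{1}[y]add0r; apply: sumset_mem => //; have := @cyc_mem y n 1 n0 hn; rewrite mulr1n.
  by rewrite -[u]addr0; apply: sumset_mem => //; exact: Ks.
Qed.

Lemma card_sumset_r A B a : a \in A -> (#|` B| <= #|` sumset A B|)%N.
Proof.
move=> aA; rewrite -(card_transl B a); apply: fsubset_leq_card; apply/fsubsetP => z.
by case/imfsetP => b bB ->; apply: sumset_mem.
Qed.
Lemma card_sumset_l A B b : b \in B -> (#|` A| <= #|` sumset A B|)%N.
Proof.
move=> bB; rewrite -(card_transl A b); apply: fsubset_leq_card; apply/fsubsetP => z.
by case/imfsetP => a aA ->; rewrite addrC; apply: sumset_mem.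
Qed.
Lemma sumset_sub A B A' B' : fsubset A A' -> fsubset B B' -> fsubset (sumset A B) (sumset A' B').
Proof.
move=> /fsubsetP hA /fsubsetP hB; apply/fsubsetP => z /sumsetP [a aA [b bB ->]].
by apply: sumset_mem; [apply: hA | apply: hB].
Qed.

Section Coset.
Variable x : G.
Hypothesis hx : ~ torsion x.

Definition sc (y z : G) : Prop := exists k : int, y - z = x *~ k.

Lemma sc_refl y : sc y y.
Proof. by exists 0; rewrite subrr mulr0z. Qed.
Lemma sc_sym y z : sc y z -> sc z y.
Proof. by case=> k h; exists (- k); rewrite mulrNz -h opprB. Qed.
Lemma sc_trans y z w : sc y z -> sc z w -> sc y w.
Proof.
case=> k1 h1 [k2 h2]; exists (k1 + k2).
by rewrite mulrzDr -h1 -h2 addrA subrK.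
Qed.

Arguments sc_sym {y z}.
Arguments sc_trans {y z w}.
Lemma xn0 n : x *+ n = 0 -> n = 0%N.
Proof.
case: n => // n h; exfalso; apply: hx; by exists n.+1.
Qed.

Lemma max_seq (s : seq G) y : (forall a b, a \in y :: s -> b \in y :: s -> sc a b) ->
  exists2 m, m \in y :: s & forall z, z \in y :: s -> exists k : nat, m = z + x *+ k.
Proof.
elim: s y => [|z s IH] y hs.
  exists y; first by rewrite inE.
  by move=> z; rewrite inE => /eqP ->; exists 0%N; rewrite mulr0n addr0.
have [m' m's hm'] : exists2 m, m \in z :: s & forall w, w \in z :: s -> exists k : nat, m = w + x *+ k.
  by apply: IH => a b ha hb; apply: hs; rewrite inE ?ha ?hb orbT.
have [k hk] : sc y m' by apply: hs; rewrite inE ?m's ?eqxx ?orbT.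
case: k hk => n hn.
- exists y; first by rewrite inE eqxx.
  move=> w; rewrite inE => /orP [/eqP ->|ws]; first by exists 0%N; rewrite mulr0n addr0.
  have [j hj] := hm' w ws; exists (j + n)%N.
  by rewrite mulrnDr addrA -hj pmulrn -hn addrC subrK.
- exists m'; first by rewrite inE m's orbT.
  move=> w; rewrite inE => /orP [/eqP ->|ws]; last exact: hm'.
  exists n.+1; move: hn; rewrite NegzE mulrNz => hn.
  by rewrite pmulrn -[x *~ _]opprK -hn opprB addrC subrK.
Qed.

Lemma max_fset (E : {fset G}) : E != fset0 -> {in E &, forall a b, sc a b} ->
  exists2 m, m \in E & forall z, z \in E -> exists k : nat, m = z + x *+ k.
Proof.
move=> En hE.
have memE : forall z, (z \in E) = (z \in enum_fset E) by [].
move: En memE hE; case: (enum_fset E) => [|y s] En memE hE.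
  by case/fset0Pn: En => z; rewrite memE.
have [m ms hm] := @max_seq s y (fun a b ha hb => hE a b (etrans (memE a) ha) (etrans (memE b) hb)).
by exists m; [rewrite memE | move=> z; rewrite memE; apply: hm].
Qed.


Lemma zlem (E F : {fset G}) : E != fset0 -> F != fset0 ->
  {in E &, forall a b, sc a b} -> {in F &, forall a b, sc a b} ->
  (#|` E| + #|` F| <= #|` sumset E F| + 1)%N.
Proof.
move=> + Fn + hF.
have [mF mFF hmF] := @max_fset F Fn hF.
move: {2}#|` E| (leqnn #|` E|) => n; elim: n E => [|n IH] E hEn En hE.
  by move: En; rewrite -cardfs_gt0; lia.
have [m mE hm] := @max_fset E En hE.
have cE := cardfsD1 m E; rewrite mE /= in cE.
have [E'0|E'n] := eqVneq (E `\ m) fset0.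
  rewrite cE E'0 cardfs0 addn0 add1n addn1 ltnS.
  exact: (@card_sumset_r E F m mE).
have hE' : {in E `\ m &, forall a b, sc a b}.
  by move=> a b /fsetD1P [_ ha] /fsetD1P [_ hb]; apply: hE.
have := IH _ _ E'n hE'.
have -> : (#|` E `\ m| <= n)%N by move: hEn; rewrite cE add1n ltnS.
move=> /(_ isT) ih.
have sub : fsubset (sumset (E `\ m) F) (sumset E F `\ (m + mF)).
  apply/fsubsetP => z /sumsetP [a /fsetD1P [am aE] [b bF ->]].
  apply/fsetD1P; split; last by apply: sumset_mem.
  apply/eqP => eq1.
  have [k hk] := hm a aE; have [l hl] := hmF b bF.
  move: eq1; rewrite hk hl addrACA -mulrnDr -{1}[a + b]addr0 => /addrI /esym /xn0 /eqP.
  rewrite addn_eq0 => /andP [/eqP k0 _].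
  by move: am; rewrite hk k0 mulr0n addr0 eqxx.
have h3 : (#|` sumset (E `\ m) F| + 1 <= #|` sumset E F|)%N.
  have := fsubset_leq_card sub.
  by rewrite (cardfsD1 (m + mF) (sumset E F)) sumset_mem //= add1n addn1 ltnS.
have ih' : (#|` E `\ m| + #|` F| <= #|` sumset (E `\ m) F| + 1)%N by exact: ih.
have cE' : #|` E| = (1 + #|` E `\ m|)%N by exact: cE.
move: ih' h3; rewrite cE'; lia.
Qed.

Definition fib (B : {fset G}) (b : G) : {fset G} := [fset z in B | `[< sc z b >]].

Lemma in_fib B b z : (z \in fib B b) = (z \in B) && `[< sc z b >].
Proof. by rewrite !inE. Qed.

Lemma fib_sub B b : fsubset (fib B b) B.
Proof. by apply/fsubsetP => z; rewrite in_fib => /andP []. Qed.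

Lemma fib_self B b : b \in B -> b \in fib B b.
Proof. by move=> bB; rewrite in_fib bB; apply/asboolP; apply: sc_refl. Qed.

Lemma fib_sc B b : {in fib B b &, forall y z, sc y z}.
Proof.
move=> y z; rewrite !in_fib => /andP [_ /asboolP hy] /andP [_ /asboolP hz].
by apply: sc_trans hy (sc_sym hz).
Qed.

Lemma fiberF (E : {fset G}) N : E != fset0 -> {in E &, forall a b, sc a b} ->
  forall B, (forall b, b \in B -> #|` fib B b| <= N)%N ->
  ((N + #|` E| - 1) * #|` B| <= N * #|` sumset E B|)%N.
Proof.
move=> En hE B.
move: {2}#|` B| (leqnn #|` B|) => n; elim: n B => [|n IH] B hBn hfB.
  by move: hBn; rewrite leqn0 => /eqP ->; rewrite muln0.
have [->|Bn] := eqVneq B fset0; first by rewrite cardfs0 muln0.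
case/fset0Pn: Bn => b bB.
set Bb := fib B b; set B2 := B `\` Bb.
have e1 : (0 < #|` E|)%N by rewrite cardfs_gt0.
have cB : #|` B2| = (#|` B| - #|` Bb|)%N by rewrite cardfsDS // fib_sub.
have cBb : (#|` Bb| <= #|` B|)%N by apply: fsubset_leq_card; apply: fib_sub.
have Bb1 : (0 < #|` Bb|)%N by rewrite cardfs_gt0; apply/fset0Pn; exists b; apply: fib_self.
have Bbn : Bb != fset0 by apply/fset0Pn; exists b; apply: fib_self.
have hz := @zlem E Bb En Bbn hE (@fib_sc B b).
have hbN : (#|` Bb| <= N)%N by apply: (hfB b).
have hf2 : forall z, z \in B2 -> (#|` fib B2 z| <= N)%N.
  move=> z /fsetDP [zB _]; apply: leq_trans (hfB z zB); apply: fsubset_leq_card.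
  apply/fsubsetP => w; rewrite !in_fib => /andP [/fsetDP [wB _] ->]; by rewrite wB.
have ih := IH B2 ltac:(rewrite cB; lia) hf2.
have dis : (#|` sumset E Bb| + #|` sumset E B2| <= #|` sumset E B|)%N.
  have I0 : sumset E Bb `&` sumset E B2 = fset0.
    apply/eqP; apply/fset0Pn => -[z]; rewrite inE => /andP [].
    move=> /sumsetP [e1' e1E [b1 b1B ->]] /sumsetP [e2 e2E [b2 /fsetDP [b2B b2n] eq12]].
    apply/negP: b2n; apply/negPn; rewrite in_fib b2B; apply/asboolP.
    move: b1B; rewrite in_fib => /andP [_ /asboolP hb1].
    apply: sc_trans hb1; have [k hk] := hE _ _ e1E e2E; exists k.
    by rewrite -hk; apply/eqP; rewrite subr_eq addrAC eq12 addrC addKr.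
  have := cardfsUI (sumset E Bb) (sumset E B2); rewrite I0 cardfs0 addn0 => <-.
  apply: fsubset_leq_card; rewrite fsubUset; apply/andP; split; apply: sumset_sub => //.
    exact: fib_sub.
  exact: fsubsetDl.
have hm := leq_mul hbN (leqnn (#|` E| - 1)).
move: hz ih dis hm; rewrite cB.
set c := #|` Bb|; set d := #|` B|; set e := #|` E|.
set P := #|` sumset E Bb|; set Q := #|` sumset E B2|; set T := #|` sumset E B|.
nia.
Qed.

Lemma argmax_seq (f : G -> nat) (s : seq G) y :
  exists2 m, m \in y :: s & forall z, z \in y :: s -> (f z <= f m)%N.
Proof.
elim: s y => [|z s IH] y.
  by exists y; rewrite ?inE // => z; rewrite inE => /eqP ->.
have [m ms hm] := IH z.
have [le|lt] := leqP (f y) (f m).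
  exists m; first by rewrite inE ms orbT.
  by move=> w; rewrite inE => /orP [/eqP ->|]; [|apply: hm].
exists y; first by rewrite inE eqxx.
move=> w; rewrite inE => /orP [/eqP ->//|/hm h]; exact: leq_trans h (ltnW lt).
Qed.

Lemma argmax_fset (f : G -> nat) (E : {fset G}) : E != fset0 ->
  exists2 m, m \in E & forall z, z \in E -> (f z <= f m)%N.
Proof.
move=> En.
have memE : forall z, (z \in E) = (z \in enum_fset E) by [].
move: En memE; case: (enum_fset E) => [|y s] En memE.
  by case/fset0Pn: En => z; rewrite memE.
have [m ms hm] := argmax_seq f s y.
by exists m; [rewrite memE | move=> z; rewrite memE; apply: hm].
Qed.

Lemma sc_add a a' b b' : sc a a' -> sc b b' -> sc (a + b) (b' + a').
Proof.
case=> k1 h1 [k2 h2]; exists (k1 + k2).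
by rewrite mulrzDr -h1 -h2 [b' + a']addrC opprD addrACA.
Qed.

Lemma sumsetC_sub A B : fsubset (sumset A B) (sumset B A).
Proof.
by apply/fsubsetP => z /sumsetP [a aA [b bB ->]]; rewrite addrC; apply: sumset_mem.
Qed.

Variables u0 u1 : G.
Hypothesis hu : u1 - u0 = x.

Lemma u01 : u1 != u0.
Proof.
apply/eqP => e; apply: hx; exists 1%N; split => //.
by rewrite mulr1n -hu e subrr.
Qed.

Lemma sc_u : sc u1 u0.
Proof. by exists 1; rewrite hu. Qed.

Lemma fib_big A a0 : A != fset0 -> (forall a, a \in A -> #|` fib A a| <= #|` fib A a0|)%N ->
  u0 \in A -> u1 \in A -> (2 <= #|` fib A a0|)%N.
Proof.
move=> _ hmax h0 h1; apply: leq_trans (hmax u0 h0).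
have -> : 2%N = #|` [fset u0; u1]| by rewrite cardfs2 eq_sym u01.
apply: fsubset_leq_card; apply/fsubsetP => z; rewrite !inE => /orP [] /eqP ->.
  by rewrite h0 /=; apply/asboolP; apply: sc_refl.
by rewrite h1 /=; apply/asboolP; apply: sc_u.
Qed.

Lemma sumset_sc A B : {in A &, forall a b, sc a b} -> {in B &, forall a b, sc a b} ->
  {in sumset A B &, forall a b, sc a b}.
Proof.
move=> hA hB z w /sumsetP [a aA [b bB ->]] /sumsetP [a' aA' [b' bB' ->]].
rewrite [a' + b']addrC; apply: sc_add; [exact: hA | exact: hB].
Qed.

Lemma arith_alpha M N a b X : (2 <= M)%N -> (2 <= N)%N -> ((N + M - 1) * b <= N * X)%N ->
  ((M + N - 1) * a <= M * X)%N -> (9 * (a * b) <= 4 * (X ^ 2))%N.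
Proof.
move=> hM hN h1 h2.
have h := leq_mul h1 h2.
have h3 : (9 * (M * N) <= 4 * ((N + M - 1) * (M + N - 1)))%N.
  have [p ->] : exists p, M = (p + 2)%N by exists (M - 2)%N; lia.
  have [q ->] : exists q, N = (q + 2)%N by exists (N - 2)%N; lia.
  have -> : (q + 2 + (p + 2) - 1 = p + q + 3)%N by lia.
  have -> : (p + 2 + (q + 2) - 1 = p + q + 3)%N by lia.
  nia.
have h4 := leq_mul h3 (leqnn (a * b)).
have : (M * N * (9 * (a * b)) <= M * N * (4 * X ^ 2))%N.
  apply: leq_trans (_ : 4 * ((N + M - 1) * (M + N - 1)) * (a * b) <= _)%N; first by nia.
  nia.
by rewrite leq_pmul2l //; nia.
Qed.

Lemma arith_beta M N a b X : (1 <= M)%N -> (1 <= N)%N -> ((N + M) * b <= N * X)%N ->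
  ((M + N) * a <= M * X)%N -> (4 * (a * b) <= X ^ 2)%N.
Proof.
move=> hM hN h1 h2.
have h := leq_mul h1 h2.
have h3 : (4 * (M * N) <= ((N + M) * (M + N)))%N.
  have [le|lt] := leqP M N.
    have [d ->] : exists d, N = (M + d)%N by exists (N - M)%N; lia.
    nia.
  have [d ->] : exists d, M = (N + d)%N by exists (M - N)%N; lia.
  nia.
have h4 := leq_mul h3 (leqnn (a * b)).
have : (M * N * (4 * (a * b)) <= M * N * (X ^ 2))%N by nia.
by rewrite leq_pmul2l //; nia.
Qed.

Lemma alpha_ineq A B : u0 \in A -> u1 \in A -> u0 \in B -> u1 \in B ->
  (9 * (#|` A| * #|` B|) <= 4 * (#|` sumset A B| ^ 2))%N.
Proof.
move=> h0 h1 k0 k1.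
have An : A != fset0 by apply/fset0Pn; exists u0.
have Bn : B != fset0 by apply/fset0Pn; exists u0.
have [a0 a0A hA] := @argmax_fset (fun a => #|` fib A a|) A An.
have [b0 b0B hB] := @argmax_fset (fun b => #|` fib B b|) B Bn.
have M2 := @fib_big A a0 An hA h0 h1.
have N2 := @fib_big B b0 Bn hB k0 k1.
have A0n : fib A a0 != fset0 by apply/fset0Pn; exists a0; apply: fib_self.
have B0n : fib B b0 != fset0 by apply/fset0Pn; exists b0; apply: fib_self.
have f1 := @fiberF (fib A a0) #|` fib B b0| A0n (@fib_sc A a0) B hB.
have f2 := @fiberF (fib B b0) #|` fib A a0| B0n (@fib_sc B b0) A hA.
have s1 : (#|` sumset (fib A a0) B| <= #|` sumset A B|)%N.
  by apply: fsubset_leq_card; apply: sumset_sub => //; apply: fib_sub.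
have s2 : (#|` sumset (fib B b0) A| <= #|` sumset A B|)%N.
  apply: fsubset_leq_card; apply: fsubset_trans (sumsetC_sub B A).
  by apply: sumset_sub => //; apply: fib_sub.
apply: (@arith_alpha #|` fib A a0| #|` fib B b0|) => //.
  apply: leq_trans f1 _; exact: leq_mul (leqnn _) s1.
apply: leq_trans f2 _; exact: leq_mul (leqnn _) s2.
Qed.

Lemma beta_ineq A B (U : {fset G}) : A != fset0 -> B != fset0 -> u0 \in U -> u1 \in U ->
  (4 * (#|` A| * #|` B|) <= #|` sumset (sumset A B) U| ^ 2)%N.
Proof.
move=> An Bn h0 h1.
have [a0 a0A hA] := @argmax_fset (fun a => #|` fib A a|) A An.
have [b0 b0B hB] := @argmax_fset (fun b => #|` fib B b|) B Bn.
have A0n : fib A a0 != fset0 by apply/fset0Pn; exists a0; apply: fib_self.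
have B0n : fib B b0 != fset0 by apply/fset0Pn; exists b0; apply: fib_self.
have M1 : (1 <= #|` fib A a0|)%N by rewrite cardfs_gt0.
have N1 : (1 <= #|` fib B b0|)%N by rewrite cardfs_gt0.
set V := [fset u0; u1].
have Vn : V != fset0 by apply/fset0Pn; exists u0; rewrite !inE eqxx.
have cV : #|` V| = 2%N by rewrite cardfs2 eq_sym u01.
have hV : {in V &, forall a b, sc a b}.
  have hu1 : forall z, z \in V -> sc z u0.
    by move=> z; rewrite !inE => /orP [] /eqP ->; [apply: sc_refl | apply: sc_u].
  by move=> a b ha hb; apply: sc_trans (hu1 a ha) (sc_sym (hu1 b hb)).
have EAn : sumset (fib A a0) V != fset0.
  by apply/fset0Pn; exists (a0 + u0); apply: sumset_mem; [apply: fib_self | rewrite !inE eqxx].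
have EBn : sumset (fib B b0) V != fset0.
  by apply/fset0Pn; exists (b0 + u0); apply: sumset_mem; [apply: fib_self | rewrite !inE eqxx].
have zA := @zlem (fib A a0) V A0n Vn (@fib_sc A a0) hV.
have zB := @zlem (fib B b0) V B0n Vn (@fib_sc B b0) hV.
have f1 := @fiberF _ #|` fib B b0| EAn (@sumset_sc _ V (@fib_sc A a0) hV) B hB.
have f2 := @fiberF _ #|` fib A a0| EBn (@sumset_sc _ V (@fib_sc B b0) hV) A hA.
have VU : fsubset V U by apply/fsubsetP => z; rewrite !inE => /orP [] /eqP ->.
have s1 : (#|` sumset (sumset (fib A a0) V) B| <= #|` sumset (sumset A B) U|)%N.
  apply: fsubset_leq_card; apply/fsubsetP => z /sumsetP [w /sumsetP [a aA [v vV ->]] [b bB ->]].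
  rewrite addrAC; apply: sumset_mem; last by apply: (fsubsetP VU).
  by apply: sumset_mem => //; apply: (fsubsetP (fib_sub A a0)).
have s2 : (#|` sumset (sumset (fib B b0) V) A| <= #|` sumset (sumset A B) U|)%N.
  apply: fsubset_leq_card; apply/fsubsetP => z /sumsetP [w /sumsetP [b bB [v vV ->]] [a aA ->]].
  rewrite addrAC [b + a]addrC; apply: sumset_mem; last by apply: (fsubsetP VU).
  by apply: sumset_mem => //; apply: (fsubsetP (fib_sub B b0)).
apply: (@arith_beta #|` fib A a0| #|` fib B b0|) => //.
  apply: leq_trans (leq_mul (leqnn _) s1).
  apply: leq_trans f1; apply: leq_mul => //; move: zA; rewrite cV; lia.
apply: leq_trans (leq_mul (leqnn _) s2).
apply: leq_trans f2; apply: leq_mul => //; move: zB; rewrite cV; lia.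
Qed.

End Coset.
End S.
Section R.
Variable R : realType.
Lemma ratio_ge (k : R) (a b L : nat) : 0 <= k -> (0 < a)%N -> (0 < b)%N ->
  k ^+ 2 * (a%:R * b%:R) <= (L%:R) ^+ 2 -> k <= L%:R / Num.sqrt (a%:R * b%:R).
Proof.
move=> k0 a0 b0 h.
have ab0 : (0 : R) < a%:R * b%:R by rewrite mulr_gt0 // ltr0n.
have s0 : (0 : R) < Num.sqrt (a%:R * b%:R) by rewrite sqrtr_gt0.
have ss := sqr_sqrtr (ltW ab0).
move: s0 ss h; set s := Num.sqrt _ => s0 ss h.
rewrite ler_pdivlMr //.
have L0 : (0 : R) <= L%:R by [].
have ks : 0 <= k * s by rewrite mulr_ge0 // ltW.
rewrite -ler_sqr ?nnegrE // exprMn ss //.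
Qed.

Lemma ratio_ge1 (k : R) (a L : nat) : (0 < a)%N -> k * a%:R <= L%:R -> k <= L%:R / a%:R.
Proof. by move=> a0 h; rewrite ler_pdivlMr // ltr0n. Qed.

Lemma inf_eq1 (S : set R) : S 1 -> (forall r, S r -> 1 <= r) -> inf S = 1.
Proof.
move=> S1 h; apply/eqP; rewrite eq_le; apply/andP; split.
  by apply: ge_inf => //; exists 1.
by apply: lb_le_inf; [exists 1 | ].
Qed.
End R.

Arguments card_sumset_l {G A B b}.
Arguments card_transl {G}.
Arguments card_sumset_r {G A B a}.
Section Lb.
Local Open Scope ring_scope.
Variable G : zmodType.
Lemma lb_pair (A B : {fset G}) : A != fset0 -> B != fset0 ->
  (#|` A| * #|` B| <= #|` sumset A B| ^ 2)%N.
Proof.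
case/fset0Pn => a aA /fset0Pn [b bB].
rewrite expnS expn1; apply: leq_mul; [exact: card_sumset_l bB | exact: card_sumset_r aA].
Qed.
Arguments lb_pair {A B}.
Lemma lb_triple (A B U : {fset G}) : A != fset0 -> B != fset0 -> U != fset0 ->
  (#|` A| * #|` B| <= #|` sumset (sumset A B) U| ^ 2)%N.
Proof.
move=> An Bn /fset0Pn [u uU]; apply: leq_trans (lb_pair An Bn) _.
by rewrite leq_exp2r //; apply: card_sumset_l uU.
Qed.
Lemma lb_triple1 (A B U : {fset G}) : B != fset0 -> U != fset0 ->
  (#|` A| <= #|` sumset (sumset A B) U|)%N.
Proof.
move=> /fset0Pn [b bB] /fset0Pn [u uU]; apply: leq_trans (card_sumset_l uU).
exact: card_sumset_l bB.
Qed.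
End Lb.
Arguments lb_pair {G A B}.

Lemma nat_sq_R (R : realType) (k : R) (c d a b L : nat) : k = c%:R / d%:R -> (0 < d)%N ->
  (c ^ 2 * (a * b) <= d ^ 2 * L ^ 2)%N -> k ^+ 2 * (a%:R * b%:R) <= (L%:R) ^+ 2.
Proof.
move=> -> d0 h.
have d0' : (0 : R) < d%:R ^+ 2 by rewrite exprn_gt0 // ltr0n.
rewrite expr_div_n mulrAC ler_pdivrMr //.
by rewrite -!natrX -!natrM ler_nat [(L ^ 2 * _)%N]mulnC.
Qed.

Theorem mainTheorem19 (R : realType) (G : zmodType) (U : {fset G}) :
  U != fset0 ->
  ((exists g : G, forall u : G, u \in U -> torsion (u - g)) ->
     [/\ alpha R U = 1, alpha' R U = 1 & alpha'' R U = 1] /\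
     [/\ beta R U = 1, beta' R U = 1 & beta'' R U = 1]) /\
  (~ (exists g : G, forall u : G, u \in U -> torsion (u - g)) ->
     2 <= beta R U /\ 3 / 2 <= alpha R U).
Proof.
move=> Un.
have lb1 : forall (a b L : nat), (0 < a)%N -> (0 < b)%N -> (a * b <= L ^ 2)%N ->
    (1 : R) <= L%:R / Num.sqrt (a%:R * b%:R).
  move=> a b L a0 b0 h; apply: ratio_ge => //.
  by apply: (@nat_sq_R R 1 1 1) => //; rewrite ?divr1 // !mul1n.
have lb1' : forall (a L : nat), (0 < a)%N -> (a <= L)%N -> (1 : R) <= L%:R / a%:R.
  by move=> a L a0 h; apply: ratio_ge1 => //; rewrite mul1r ler_nat.
split.
  case=> g hg.
  have [K [K0 KD KU]] := @torsion_group G [seq u - g | u <- enum_fset U]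
     (fun u hu => match mapP hu with ex_intro2 v vU e => eq_ind_r _ (hg v vU) e end).
  have KU' : forall u, u \in U -> u - g \in K.
    by move=> u uU; apply: KU; apply/mapP; exists u.
  set A := [fset (g + k)%R | k in K].
  have gA : g \in A by apply/imfsetP; exists 0 => //; rewrite addr0.
  have UA : fsubset U A.
    by apply/fsubsetP => u uU; apply/imfsetP; exists (u - g); [exact: KU' | rewrite addrC subrK].
  have An : A != fset0 by apply/fset0Pn; exists g.
  have Kn : K != fset0 by apply/fset0Pn; exists 0.
  have cA : #|` A| = #|` K| by apply: card_transl.
  have AA : #|` sumset A A| = #|` A|.
    apply/eqP; rewrite eqn_leq; apply/andP; split; last exact: card_sumset_l gA.
    rewrite cA -(card_transl K (g + g)); apply: fsubset_leq_card; apply/fsubsetP => z.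
    case/sumsetP => a /imfsetP [k1 k1K ->] [b /imfsetP [k2 k2K ->] ->].
    by apply/imfsetP; exists (k1 + k2)%R; [apply: KD | rewrite addrACA].
  have KK : #|` sumset (sumset K K) U| = #|` K|.
    apply/eqP; rewrite eqn_leq; apply/andP; split; last exact: lb_triple1.
    rewrite -(card_transl K g); apply: fsubset_leq_card; apply/fsubsetP => z.
    case/sumsetP => w /sumsetP [k1 k1K [k2 k2K ->]] [u uU ->].
    apply/imfsetP; exists (k1 + k2 + (u - g))%R; first by apply: (KD); [apply: (KD) | apply: KU'].
    by rewrite addrCA [(g + _)%R]addrC subrK.
  have Ap : (0 < #|` A|)%N by rewrite cardfs_gt0.
  have Kp : (0 < #|` K|)%N by rewrite cardfs_gt0.
  have sq : forall n : nat, (0 < n)%N -> (n%:R : R) / Num.sqrt (n%:R * n%:R) = 1.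
    move=> n n0; rewrite -expr2 sqrtr_sqr ger0_norm ?ler0n // divff //.
    by rewrite pnatr_eq0 -lt0n.
  have dv : forall n : nat, (0 < n)%N -> (n%:R : R) / n%:R = 1.
    by move=> n n0; rewrite divff // pnatr_eq0 -lt0n.
  split; split.
  - rewrite /alpha; apply: inf_eq1.
      by exists A, A; split => //; rewrite /card_r AA sq.
    move=> r [A' [B' [A'n B'n _ _ ->]]]; rewrite /card_r; apply: lb1; rewrite ?cardfs_gt0 //.
    exact: lb_pair.
  - rewrite /alpha'; apply: inf_eq1.
      by exists A, A; split => //; split => //; rewrite /card_r AA dv.
    move=> r [A' [B' [A'n B'n _ _ [_ ->]]]]; rewrite /card_r; apply: lb1'; rewrite ?cardfs_gt0 //.
    by case/fset0Pn: B'n => b bB; apply: card_sumset_l bB.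
  - rewrite /alpha''; apply: inf_eq1.
      by exists A; split => //; rewrite /card_r AA dv.
    move=> r [A' [A'n _ ->]]; rewrite /card_r; apply: lb1'; rewrite ?cardfs_gt0 //.
    by case/fset0Pn: A'n => b bB; apply: card_sumset_l bB.
  - rewrite /beta; apply: inf_eq1.
      by exists K, K; split => //; rewrite /card_r KK sq.
    move=> r [A' [B' [A'n B'n ->]]]; rewrite /card_r; apply: lb1; rewrite ?cardfs_gt0 //.
    exact: lb_triple.
  - rewrite /beta'; apply: inf_eq1.
      by exists K, K; split => //; rewrite /card_r KK sq.
    move=> r [A' [B' [A'n B'n _ ->]]]; rewrite /card_r; apply: lb1; rewrite ?cardfs_gt0 //.
    exact: lb_triple.
  - rewrite /beta''; apply: inf_eq1.
      by exists K; split => //; rewrite /card_r KK dv.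
    move=> r [A' [A'n ->]]; rewrite /card_r; apply: lb1'; rewrite ?cardfs_gt0 //.
    exact: lb_triple1.
move=> hno.
case/fset0Pn: (Un) => u0 u0U.
have [u1 [u1U hx]] : exists u1, u1 \in U /\ ~ torsion (u1 - u0).
  case: (pselect (exists u1, u1 \in U /\ ~ torsion (u1 - u0))) => // hn; exfalso.
  apply: hno; exists u0 => u uU.
  case: (pselect (torsion (u - u0))) => // ht; exfalso; apply: hn; by exists u.
split.
- rewrite /beta; apply: lb_le_inf.
    by eexists; exists U, U; split.
  move=> r [A [B [An Bn ->]]]; rewrite /card_r; apply: ratio_ge; rewrite ?cardfs_gt0 //.
  apply: (@nat_sq_R R 2 2 1) => //; first by rewrite divr1.
  rewrite exp1n mul1n; exact: (@beta_ineq G _ hx u0 u1 erefl A B U An Bn u0U u1U).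
- rewrite /alpha; apply: lb_le_inf.
    by eexists; exists U, U; split => //; apply: fsubset_refl.
  move=> r [A [B [An Bn UA UB ->]]]; rewrite /card_r; apply: ratio_ge; rewrite ?cardfs_gt0 //; first by rewrite divr_ge0.
  apply: (@nat_sq_R R _ 3 2) => //.
  exact: (@alpha_ineq G _ hx u0 u1 erefl A B (fsubsetP UA _ u0U) (fsubsetP UA _ u1U)
       (fsubsetP UB _ u0U) (fsubsetP UB _ u1U)).
Qed.
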